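(* Let $(\xi,\eta)\in\mathbb{R}^2$ be such that $1,\xi,\eta$ are linearly independent over $\mathbb{Q}$, $f(\xi,\eta)=0$ for some irreducible $f\in\mathbb{Q}[x,y]$ of degree $2$ with $f\notin\mathbb{Q}[x]$, and there is $\lambda>1/2$ such that for every sufficiently large $X\ge1$ the system $|x_0|\le X$, $|x_0\xi-x_1|\le X^{-\lambda}$, $|x_0\eta-x_2|\le X^{-\lambda}$ has a non-zero solution in $\mathbb{Z}^3$. Let $(\mathbf{x}_i)_{i\ge1}$ be a sequence of minimal points for $(\xi,\eta)$, $W_i=\langle\mathbf{x}_i,\mathbf{x}_{i+1}\rangle_{\mathbb{Q}}$, and $H(W_i)=\|\mathbf{x}_i\wedge\mathbf{x}_{i+1}\|_2$. Let $I$ be the set of indices $i\ge2$ such that $\mathbf{x}_{i-1},\mathbf{x}_i,\mathbf{x}_{i+1}$ are linearly independent over $\mathbb{Q}$. Then $I$ is infinite, and for any pair of consecutive elements $i<j$ of $I$ we have $W_i\neq W_j$ and $X_j\le H(W_i)H(W_j)$.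
   Context: For $\mathbf{x}=(x_0,x_1,x_2)\in\mathbb{Z}^3$ put $\delta(\mathbf{x})=\max\{|x_0\xi-x_1|,|x_0\eta-x_2|\}$. For $X\ge1$, $\Delta(X)$ is the minimum of $\delta(\mathbf{x})$ over all $\mathbf{x}\in\mathbb{Z}^3$ with $1\le x_0\le X$. Let $X_1=1<X_2<X_3<\cdots$ be the number $1$ together with the points of discontinuity of $\Delta$, in increasing order, and $\Delta_i=\Delta(X_i)$. A sequence of minimal points is a choice, for each $i\ge1$, of $\mathbf{x}_i=(x_{i,0},x_{i,1},x_{i,2})\in\mathbb{Z}^3$ with $x_{i,0}=X_i$ and $\delta(\mathbf{x}_i)=\Delta_i$. $\wedge$ denotes the cross product in $\mathbb{R}^3$ and $\|\cdot\|_2$ the Euclidean norm; consecutive elements of $I$ are taken in the natural order of $\mathbb{N}$. *)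

(* Defs.v *)
From HB Require Import structures.
From mathcomp Require Import all_boot all_order all_algebra.
From mathcomp Require Import mpoly.
From mathcomp Require Import classical_sets reals exp.
Set Implicit Arguments. Unset Strict Implicit. Unset Printing Implicit Defensive.
Import Order.TTheory GRing.Theory Num.Theory.
Local Open Scope classical_set_scope.
Local Open Scope ring_scope.

Definition Z3 := 'rV[int]_3.
Definition i0 : 'I_3 := @Ordinal 3 0 isT.
Definition i1 : 'I_3 := @Ordinal 3 1 isT.
Definition i2 : 'I_3 := @Ordinal 3 2 isT.
Definition cd (x : Z3) (k : 'I_3) : int := x ord0 k.

Section Defs.
Variable R : realType.

Definition delta (xi eta : R) (x : Z3) : R :=
  Num.max `|(cd x i0)%:~R * xi - (cd x i1)%:~R| `|(cd x i0)%:~R * eta - (cd x i2)%:~R|.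

Definition Delta (xi eta : R) (X : R) : R :=
  inf [set delta xi eta x | x in [set x : Z3 | (1 <= cd x i0)%R /\ (cd x i0)%:~R <= X]].

Definition disc_pt (f : R -> R) (t : R) : Prop :=
  1 <= t /\
  ~ (forall e : R, 0 < e -> exists2 d : R, 0 < d &
       forall s : R, 1 <= s -> `|s - t| < d -> `|f s - f t| < e).

Definition breakpoint_seq (xi eta : R) (Xs : nat -> R) : Prop :=
  Xs 1%N = 1 /\ (forall i, (1 <= i)%N -> Xs i < Xs i.+1) /\
  (forall t : R, (t = 1 \/ disc_pt (Delta xi eta) t) <-> exists2 i, (1 <= i)%N & Xs i = t).

Definition minimal_points (xi eta : R) (x : nat -> Z3) : Prop :=
  exists Xs : nat -> R, breakpoint_seq xi eta Xs /\
    forall i, (1 <= i)%N ->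
      (cd (x i) i0)%:~R = Xs i /\ delta xi eta (x i) = Delta xi eta (Xs i).

Definition Qlin_indep3 (xi eta : R) : Prop :=
  forall a b c : rat, ratr a + ratr b * xi + ratr c * eta = 0 -> [/\ a = 0, b = 0 & c = 0].

(* evaluation point (xi, eta) for polynomials in Q[x,y] = Q[X_0, X_1] *)
Definition pt2 (xi eta : R) : 'I_2 -> R := fun k => if val k == 0%N then xi else eta.

Definition uniform_exponent_gt (xi eta : R) (lam : R) : Prop :=
  exists X0 : R, forall X : R, 1 <= X -> X0 <= X ->
    exists x : Z3, x != 0 /\
      `|(cd x i0)%:~R| <= X /\
      `|(cd x i0)%:~R * xi - (cd x i1)%:~R| <= X `^ (- lam) /\
      `|(cd x i0)%:~R * eta - (cd x i2)%:~R| <= X `^ (- lam).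

End Defs.

Definition x_var : 'I_2 := @Ordinal 2 0 isT.

Definition irreducible_mpoly (f : {mpoly rat[2]}) : Prop :=
  f != 0 /\ f \isn't a GRing.unit /\
  forall g h : {mpoly rat[2]}, f = g * h -> g \is a GRing.unit \/ h \is a GRing.unit.

Definition in_Qx (f : {mpoly rat[2]}) : Prop :=
  exists g : {poly rat}, f = (map_poly (@mpolyC 2 rat) g).['X_x_var].

Definition qv (x : Z3) : 'rV[rat]_3 := map_mx intr x.

(* cross product in Z^3 *)
Definition wedge (x y : Z3) : Z3 :=
  \row_(k < 3)
    (if val k == 0%N then cd x i1 * cd y i2 - cd x i2 * cd y i1
     else if val k == 1%N then cd x i2 * cd y i0 - cd x i0 * cd y i2
     else cd x i0 * cd y i1 - cd x i1 * cd y i0).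

Definition norm2 (R : realType) (w : Z3) : R :=
  Num.sqrt (\sum_(k < 3) ((cd w k)%:~R) ^+ 2).

(* W_i = <x_i, x_{i+1}>_Q, encoded by the 2x3 matrix with these rows (row space) *)
Definition Wsp (x : nat -> Z3) (i : nat) : 'M[rat]_(1 + 1, 3) :=
  col_mx (qv (x i)) (qv (x i.+1)).

Definition HW (R : realType) (x : nat -> Z3) (i : nat) : R := norm2 R (wedge (x i) (x i.+1)).

Definition in_I (x : nat -> Z3) (i : nat) : bool :=
  (2 <= i)%N &&
  row_free (col_mx (qv (x i.-1)) (col_mx (qv (x i)) (qv (x i.+1)))).

(* Main.v *)
Require Import Defs.
From HB Require Import structures.
From mathcomp Require Import all_boot all_order all_algebra.
From mathcomp Require Import mpoly.
From mathcomp Require Import classical_sets reals exp.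
From mathcomp Require Import ring.
Import Order.TTheory GRing.Theory Num.Theory.
Local Open Scope ring_scope.

Lemma det3 (R : comNzRingType) (A : 'M[R]_3) :
  \det A = A (inord 0) (inord 0) * (A (inord 1) (inord 1) * A (inord 2) (inord 2) - A (inord 1) (inord 2) * A (inord 2) (inord 1))
         - A (inord 0) (inord 1) * (A (inord 1) (inord 0) * A (inord 2) (inord 2) - A (inord 1) (inord 2) * A (inord 2) (inord 0))
         + A (inord 0) (inord 2) * (A (inord 1) (inord 0) * A (inord 2) (inord 1) - A (inord 1) (inord 1) * A (inord 2) (inord 0)).
Proof.
pose g (i j : nat) := A (inord i) (inord j).
have Aeq : forall o1 o2 : 'I_3, A o1 o2 = g o1 o2 by move=> o1 o2; rewrite /g !inord_val.
rewrite -/(g 0%N 0%N) -/(g 0%N 1%N) -/(g 0%N 2%N) -/(g 1%N 0%N) -/(g 1%N 1%N) -/(g 1%N 2%N)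
  -/(g 2%N 0%N) -/(g 2%N 1%N) -/(g 2%N 2%N).
rewrite (expand_det_row _ 0) !big_ord_recl big_ord0 /cofactor.
rewrite !(expand_det_row _ 0) !big_ord_recl big_ord0 /cofactor !det_mx11 !mxE.
rewrite !Aeq. clearbody g. rewrite /=.
rewrite /bump /=.
rewrite !big_ord0 !addn0 !add0n !expr0 !expr1 ?mulr1 ?mul1r.
have -> : (1+1 = 2)%N by []. rewrite -[(-1)^+2]/((-1)*(-1)).
ring.
Qed.

Definition dot (u v : Z3) : int := cd u i0 * cd v i0 + cd u i1 * cd v i1 + cd u i2 * cd v i2.
Definition trip (u v w : Z3) : int := dot u (wedge v w).

Lemma wedge0 u v : cd (wedge u v) i0 = cd u i1 * cd v i2 - cd u i2 * cd v i1.
Proof. by rewrite /cd /wedge mxE. Qed.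
Lemma wedge1 u v : cd (wedge u v) i1 = cd u i2 * cd v i0 - cd u i0 * cd v i2.
Proof. by rewrite /cd /wedge mxE. Qed.
Lemma wedge2 u v : cd (wedge u v) i2 = cd u i0 * cd v i1 - cd u i1 * cd v i0.
Proof. by rewrite /cd /wedge mxE. Qed.

Lemma qvE (u : Z3) (c : 'I_3) : qv u 0 c = (cd u c)%:~R.
Proof. by rewrite /qv mxE. Qed.

Lemma in_I_trip (x : nat -> Z3) k :
  in_I x k = (2 <= k)%N && (trip (x k.-1) (x k) (x k.+1) != 0).
Proof.
rewrite /in_I; congr (_ && _).
set M := col_mx _ _.
have -> : row_free M = row_free (M : 'M[rat]_3) by [].
rewrite row_free_unit unitmxE unitfE det3.
have m0 : forall c, M (inord 0) c = (cd (x k.-1) c)%:~R.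
  move=> c; have -> : (inord 0 : 'I_(1 + (1 + 1))) = lshift _ (0 : 'I_1) by apply/val_inj; rewrite /= inordK.
  by rewrite /M col_mxEu qvE.
have m1 : forall c, M (inord 1) c = (cd (x k) c)%:~R.
  move=> c; have -> : (inord 1 : 'I_(1 + (1 + 1))) = rshift 1 (lshift 1 (0 : 'I_1)) by apply/val_inj; rewrite /= inordK.
  by rewrite /M col_mxEd col_mxEu qvE.
have m2 : forall c, M (inord 2) c = (cd (x k.+1) c)%:~R.
  move=> c; have -> : (inord 2 : 'I_(1 + (1 + 1))) = rshift 1 (rshift 1 (0 : 'I_1)) by apply/val_inj; rewrite /= inordK.
  by rewrite /M col_mxEd col_mxEd qvE.
rewrite !m0 !m1 !m2.
have f0 : (inord 0 : 'I_3) = i0 by apply/val_inj; rewrite /= inordK.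
have f1 : (inord 1 : 'I_3) = i1 by apply/val_inj; rewrite /= inordK.
have f2 : (inord 2 : 'I_3) = i2 by apply/val_inj; rewrite /= inordK.
rewrite f0 f1 f2 /trip /dot wedge0 wedge1 wedge2.
rewrite -(intr_eq0 rat).
rewrite !(rmorphD, rmorphB, rmorphM, rmorphN) /=.
by congr (~~ (_ == _)); ring.
Qed.

Ltac unf := rewrite /trip /dot ?(wedge0, wedge1, wedge2).

Lemma dot_wedge_l u v : dot u (wedge u v) = 0. Proof. unf; ring. Qed.
Lemma dot_wedge_r u v : dot v (wedge u v) = 0. Proof. unf; ring. Qed.
Lemma dotC u v : dot u v = dot v u. Proof. unf; ring. Qed.

Lemma step_lem (a u v w : Z3) : dot a u = 0 -> dot a v = 0 ->
  dot (wedge u v) (wedge u v) != 0 -> trip u v w = 0 -> dot a w = 0.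
Proof.
move=> hu hv hc ht.
have id : dot (wedge u v) (wedge u v) * dot a w =
  dot a (wedge u v) * trip u v w + dot a v * dot w (wedge (wedge u v) u)
  - dot a u * dot w (wedge (wedge u v) v) by unf; ring.
move: id; rewrite hu hv ht !mul0r mulr0 !addr0 ?subr0 ?sub0r ?oppr0 ?addr0 => /eqP.
by rewrite mulf_eq0 (negbTE hc) /= => /eqP.
Qed.

Lemma det_lem (a u v w : Z3) : dot a u = 0 -> dot a v = 0 -> dot a w = 0 ->
  dot a a != 0 -> trip u v w = 0.
Proof.
move=> hu hv hw ha.
have id : trip u v w * dot a a = dot a u * dot a (wedge v w) + dot a v * dot a (wedge w u)
  + dot a w * dot a (wedge u v) by unf; ring.
move: id; rewrite hu hv hw !mul0r !addr0 => /eqP.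
by rewrite mulf_eq0 (negbTE ha) orbF => /eqP.
Qed.

Lemma par_id (a b y : Z3) : dot a a * dot b y - dot a b * dot a y = dot y (wedge (wedge a b) a).
Proof. unf; ring. Qed.

Lemma wedge_wedge (a b w : Z3) :
  [/\ cd (wedge (wedge a b) w) i0 = cd b i0 * dot a w - cd a i0 * dot b w,
      cd (wedge (wedge a b) w) i1 = cd b i1 * dot a w - cd a i1 * dot b w &
      cd (wedge (wedge a b) w) i2 = cd b i2 * dot a w - cd a i2 * dot b w].
Proof. split; unf; ring. Qed.

Lemma lagrange (a b : Z3) : dot (wedge a b) (wedge a b) + dot a b ^+ 2 = dot a a * dot b b.
Proof. unf; ring. Qed.

Lemma sub_dot (u v w : Z3) : (qv w <= col_mx (qv u) (qv v))%MS -> dot (wedge u v) w = 0.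
Proof.
move=> /submxP [D E].
rewrite -[D]hsubmxK mul_row_col in E.
move: (lsubmx D) (rsubmx D) E => A B E.
have ec : forall c, (cd w c)%:~R = A 0 0 * (cd u c)%:~R + B 0 0 * (cd v c)%:~R :> rat.
  move=> c; have := congr1 (fun M : 'M[rat]_(1,3) => M 0 c) E.
  rewrite /= qvE => ->; by rewrite !mxE !big_ord1 !qvE.
apply: (@intr_inj rat); rewrite rmorph0.
unf; rewrite !(rmorphD, rmorphB, rmorphM, rmorphN) /= !ec; ring.
Qed.

Definition MP {R : realType} (xi eta : R) (x : nat -> Z3) : Prop :=
  [/\ forall k, (1 <= k)%N -> 1 <= cd (x k) i0,
      forall k, (1 <= k)%N -> cd (x k) i0 < cd (x k.+1) i0 &
      forall k, (1 <= k)%N -> forall y : Z3, 1 <= cd y i0 -> cd y i0 <= cd (x k) i0 ->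
        delta xi eta (x k) <= delta xi eta y].

Lemma delta_ge0 (R : realType) (xi eta : R) y : 0 <= delta xi eta y.
Proof. by rewrite /delta le_max normr_ge0. Qed.

Lemma MP_of (R : realType) (xi eta : R) (x : nat -> Z3) :
  minimal_points xi eta x -> MP xi eta x.
Proof.
move=> [Xs [[X1 [Xinc _]] Hx]].
have inc : forall k, (1 <= k)%N -> cd (x k) i0 < cd (x k.+1) i0.
  move=> k hk; rewrite -(ltr_int R) (proj1 (Hx k hk)) (proj1 (Hx k.+1 (leqW hk))).
  exact: Xinc.
split => //.
- elim=> [//|k IH] _.
  case: k IH => [_|k IH].
    by rewrite -(ler1z R) (proj1 (Hx 1%N isT)) X1.
  apply: le_trans (IH isT) _; apply: ltW; exact: inc.
- move=> k hk y hy1 hyk.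
  rewrite (proj2 (Hx k hk)).
  have := @ge_inf R [set delta xi eta x | x in [set x : Z3 | (1 <= cd x i0)%R /\ (cd x i0)%:~R <= Xs k]].
  apply.
    exists 0 => _ [z _ <-]; exact: delta_ge0.
  exists y => //; split => //.
  by rewrite -(proj1 (Hx k hk)) ler_int.
Qed.

Lemma irr_lem (R : realType) (xi eta : R) (w0 w1 : int) :
  Qlin_indep3 xi eta -> w0 != 0 -> w0%:~R * xi != w1%:~R.
Proof.
move=> Hq h0; apply/eqP => E.
have := Hq (- w1%:~R) (w0%:~R) 0.
rewrite rmorphN /= !ratr_int rmorph0 mul0r addr0 E addrC subrr => /(_ erefl) [_ /eqP + _].
by rewrite intr_eq0 (negbTE h0).
Qed.

Lemma prim (R : realType) (xi eta : R) (x : nat -> Z3) k (y : Z3) :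
  Qlin_indep3 xi eta -> MP xi eta x -> (1 <= k)%N ->
  0 < cd y i0 -> cd y i0 < cd (x k) i0 ->
  cd y i1 * cd (x k) i0 = cd y i0 * cd (x k) i1 ->
  cd y i2 * cd (x k) i0 = cd y i0 * cd (x k) i2 -> False.
Proof.
move=> Hq [H1 _ Hm] hk hy0 hyw e1 e2.
set w := x k in hyw e1 e2 Hm H1 *.
have hw0 : 0 < cd w i0 by apply: lt_le_trans (H1 k hk).
have Hle := Hm k hk y hy0 (ltW hyw).
set W : R := (cd w i0)%:~R.
set Y : R := (cd y i0)%:~R.
have Wpos : 0 < W by rewrite ltr0z.
have Ypos : 0 < Y by rewrite ltr0z.
have YW : Y < W by rewrite ltr_int.
have e1r : (cd y i1)%:~R * W = Y * (cd w i1)%:~R :> R by rewrite -!rmorphM /= e1.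
have e2r : (cd y i2)%:~R * W = Y * (cd w i2)%:~R :> R by rewrite -!rmorphM /= e2.
have sc : W * delta xi eta y = Y * delta xi eta w.
  rewrite /delta -/W -/Y (maxr_pMr _ _ (ltW Wpos)) (maxr_pMr _ _ (ltW Ypos)).
  have nW : forall a : R, W * `|a| = `|W * a| by move=> a; rewrite normrM ger0_norm // ltW.
  have nY : forall a : R, Y * `|a| = `|Y * a| by move=> a; rewrite normrM ger0_norm // ltW.
  rewrite !nW !nY !mulrBr.
  have a1 : W * (Y * xi) - W * (cd y i1)%:~R = Y * (W * xi) - Y * (cd w i1)%:~R.
    by rewrite -e1r mulrCA [W * (cd y i1)%:~R]mulrC.
  have a2 : W * (Y * eta) - W * (cd y i2)%:~R = Y * (W * eta) - Y * (cd w i2)%:~R.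
    by rewrite -e2r mulrCA [W * (cd y i2)%:~R]mulrC.
  by rewrite a1 a2.
have d0 : delta xi eta w <= 0.
  rewrite leNgt; apply/negP => dpos.
  have : W * delta xi eta w <= Y * delta xi eta w by rewrite -sc ler_wpM2l // ltW.
  by rewrite ler_pM2r // leNgt YW.
have : `|W * xi - (cd w i1)%:~R| <= 0.
  apply: le_trans d0; by rewrite /delta le_max lexx.
rewrite normr_le0 subr_eq0 => /eqP E.
have := @irr_lem R xi eta (cd w i0) (cd w i1) Hq (lt0r_neq0 hw0).
by rewrite -/W E eqxx.
Qed.

From mathcomp Require Import zify.

Lemma int_par (R : realType) (xi eta : R) (x : nat -> Z3) k (z : Z3) :
  Qlin_indep3 xi eta -> MP xi eta x -> (1 <= k)%N ->
  cd (wedge z (x k)) i1 = 0 -> cd (wedge z (x k)) i2 = 0 ->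
  exists t : int, [/\ cd z i0 = t * cd (x k) i0, cd z i1 = t * cd (x k) i1
                    & cd z i2 = t * cd (x k) i2].
Proof.
move=> Hq HM hk; rewrite wedge1 wedge2 => h1 h2.
have hw0 : 0 < cd (x k) i0 by case: HM => H1 _ _; apply: lt_le_trans (H1 k hk).
set w := x k in h1 h2 hw0 *.
set n := (cd z i0 %/ cd w i0)%Z.
set r := (cd z i0 %% cd w i0)%Z.
have ez : cd z i0 = n * cd w i0 + r by exact: divz_eq.
have r0 : 0 <= r by apply: modz_ge0; rewrite gt_eqF.
have rw : r < cd w i0 by apply: ltz_pmod.
pose y : Z3 := \row_(c < 3) (cd z c - n * cd w c).
have yE : forall c, cd y c = cd z c - n * cd w c by move=> c; rewrite /cd mxE.
have y0 : cd y i0 = r by rewrite yE ez; ring.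
have ey1 : cd y i1 * cd w i0 = cd y i0 * cd w i1.
  rewrite !yE; apply/eqP; rewrite -subr_eq0; apply/eqP.
  have -> : (cd z i1 - n * cd w i1) * cd w i0 - (cd z i0 - n * cd w i0) * cd w i1
    = - (cd z i0 * cd w i1 - cd z i1 * cd w i0) by ring.
  by rewrite h2 oppr0.
have ey2 : cd y i2 * cd w i0 = cd y i0 * cd w i2.
  rewrite !yE; apply/eqP; rewrite -subr_eq0; apply/eqP.
  have -> : (cd z i2 - n * cd w i2) * cd w i0 - (cd z i0 - n * cd w i0) * cd w i2
    = (cd z i2 * cd w i0 - cd z i0 * cd w i2) by ring.
  by rewrite h1.
have [rpos|r00] := boolP (0 < r).
  by exfalso; apply: (@prim R xi eta x k y Hq HM hk); rewrite ?y0 //; rewrite -y0.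
have rz : r = 0 by apply/eqP; rewrite eq_le r0 andbT leNgt r00.
exists n.
have yz : forall c, c \in [:: i1; i2] -> cd y c * cd w i0 = cd y i0 * cd w c -> cd y c = 0.
  move=> c _; rewrite y0 rz mul0r => /eqP; rewrite mulf_eq0 (gt_eqF hw0) orbF => /eqP //.
have := yz i1 erefl ey1; have := yz i2 erefl ey2.
rewrite !yE => /eqP; rewrite subr_eq0 => /eqP -> /eqP; rewrite subr_eq0 => /eqP ->.
by split => //; rewrite ez rz addr0.
Qed.

Lemma P1 (R : realType) (xi eta : R) (x : nat -> Z3) k :
  Qlin_indep3 xi eta -> MP xi eta x -> (1 <= k)%N ->
  dot (wedge (x k) (x k.+1)) (wedge (x k) (x k.+1)) != 0.
Proof.
move=> Hq HM hk; apply/negP => /eqP h.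
have [H1 Hinc _] := HM.
have h0 : cd (wedge (x k) (x k.+1)) i0 = 0 by move: h; rewrite /dot; nia.
have h1 : cd (wedge (x k) (x k.+1)) i1 = 0 by move: h; rewrite /dot; nia.
have h2 : cd (wedge (x k) (x k.+1)) i2 = 0 by move: h; rewrite /dot; nia.
move: h1 h2; rewrite wedge1 wedge2 => h1 h2.
apply: (@prim R xi eta x k.+1 (x k) Hq HM (leqW hk)).
- by apply: lt_le_trans (H1 k hk).
- exact: Hinc.
- by move: h2; lia.
- by move: h1; lia.
Qed.

Lemma chain (R : realType) (xi eta : R) (x : nat -> Z3) p :
  Qlin_indep3 xi eta -> MP xi eta x -> (1 <= p)%N ->
  forall n, (forall m, (p < m <= p + n)%N -> ~~ in_I x m) ->
  dot (wedge (x p) (x p.+1)) (x (p + n)%N) = 0 /\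
  dot (wedge (x p) (x p.+1)) (x (p + n)%N.+1) = 0.
Proof.
move=> Hq HM hp; elim=> [_|n IH hI].
  by rewrite addn0; split; rewrite dotC ?dot_wedge_l ?dot_wedge_r.
have [h1 h2] : dot (wedge (x p) (x p.+1)) (x (p + n)%N) = 0 /\
  dot (wedge (x p) (x p.+1)) (x (p + n)%N.+1) = 0.
  apply: IH => m /andP [hm1 hm2]; apply: hI; rewrite hm1 /=; move: hm2; lia.
rewrite addnS; split => //.
apply: (step_lem _ _ _ _ h1 h2).
  exact: (@P1 R xi eta x (p + n)%N Hq HM (leq_trans hp (leq_addr _ _))).
have := hI (p + n).+1; rewrite in_I_trip /= ltnS leq_addr addnS leqnn.
move=> /(_ isT); rewrite negb_and negbK.
have -> : (2 <= (p + n).+1)%N by rewrite ltnS (leq_trans hp (leq_addr _ _)).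
by move=> /eqP.
Qed.

Lemma norm2E (R : realType) (w : Z3) : norm2 R w = Num.sqrt ((dot w w)%:~R).
Proof.
rewrite /norm2 /dot !big_ord_recl big_ord0 addr0.
have -> : (lift ord0 (lift ord0 ord0) : 'I_3) = i2 by apply/val_inj.
have -> : (lift ord0 ord0 : 'I_3) = i1 by apply/val_inj.
have -> : (ord0 : 'I_3) = i0 by apply/val_inj.
by rewrite !(rmorphD, rmorphM) /= !expr2 addrA.
Qed.

Arguments det_lem {a u v w}.
Arguments sub_dot {u v w}.
Arguments P1 {R xi eta x k}.
Arguments chain {R xi eta x p}.

Lemma part2 (R : realType) (xi eta : R) (x : nat -> Z3) i j :
  Qlin_indep3 xi eta -> MP xi eta x ->
  in_I x i -> in_I x j -> (i < j)%N ->
  (forall k : nat, (i < k < j)%N -> ~~ in_I x k) ->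
  ~~ (Wsp x i == Wsp x j)%MS /\
  ((cd (x j) i0)%:~R : R) <= HW R x i * HW R x j.
Proof.
move=> Hq HM; rewrite !in_I_trip => /andP [hi2 ti] /andP [hj2 tj] hij hb.
have hi1 : (1 <= i)%N by lia.
have hj1 : (1 <= j)%N by lia.
have [c1 c2] := chain Hq HM hi1 (j - i - 1)%N (fun m (hm : (i < m <= i + (j - i - 1))%N) => hb m (ltac:(move: hm; lia))).
have ej : ((i + (j - i - 1)).+1 = j)%N by lia.
have ej' : ((i + (j - i - 1)) = j.-1)%N by lia.
rewrite ej in c2; rewrite ej' in c1.
have ha := P1 Hq HM hi1.
set a := wedge (x i) (x i.+1) in c1 c2 ha *.
set b := wedge (x j) (x j.+1).
split.
  apply/negP => /andP [_ hsub].
  move: hsub; rewrite /Wsp col_mx_sub => /andP [_ hs].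
  have c3 := sub_dot hs.
  have := det_lem c1 c2 c3 ha.
  by move/eqP: tj.
have bj : dot b (x j) = 0 by rewrite dotC dot_wedge_l.
have [w0 w1 w2] := wedge_wedge a b (x j).
rewrite c2 bj !mulr0 subr0 in w0 w1 w2.
have [t [t0 t1 t2]] := @int_par R xi eta x j (wedge a b) Hq HM hj1 w1 w2.
set z := wedge a b in t0 t1 t2 w0 w1 w2.
have zne : dot z z != 0.
  apply/negP => /eqP hz.
  have z0 : cd z i0 = 0 by move: hz; rewrite /dot; nia.
  have z1 : cd z i1 = 0 by move: hz; rewrite /dot; nia.
  have z2 : cd z i2 = 0 by move: hz; rewrite /dot; nia.
  have := par_id a b (x j.-1).
  rewrite c1 mulr0 subr0 [dot (x j.-1) _]/dot (wedge0 z a) (wedge1 z a) (wedge2 z a) z0 z1 z2 !(mulr0, mul0r, subr0, addr0) => /eqP.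
  rewrite mulf_eq0 (negbTE ha) /= dotC.
  by rewrite /trip in tj; rewrite (negbTE tj).
have tn0 : t != 0.
  by apply: contraNneq zne => t00; rewrite /dot t0 t1 t2 t00 !mul0r !addr0.
have hsq : 1 <= t * t.
  case: (ltgtP t 0) => ht; [nia | nia | by move/eqP: tn0].
set w := x j in t0 t1 t2 *.
have h1 : cd w i0 * cd w i0 <= dot w w by rewrite /dot; nia.
have h3 : dot z z = t * t * dot w w by rewrite /dot t0 t1 t2; ring.
have h4 : dot z z <= dot a a * dot b b.
  by rewrite -lagrange lerDl sqr_ge0.
have hww : 0 <= dot w w by rewrite /dot; nia.
have hfin : cd w i0 ^+ 2 <= dot a a * dot b b.
  rewrite expr2; apply: (le_trans h1); apply: le_trans h4; rewrite h3.
  by rewrite -[X in X <= _]mul1r ler_wpM2r.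
have haa : 0 <= dot a a by rewrite /dot; nia.
rewrite /HW !norm2E -/a -/b -sqrtrM; last by rewrite ler0z.
have hX : 0 <= (cd w i0)%:~R :> R.
  by rewrite ler0z; have [H1 _ _] := HM; apply: le_trans (H1 j hj1).
rewrite -(ger0_norm hX) -sqrtr_sqr.
apply: ler_wsqrtr.
by rewrite -rmorphXn -rmorphM /= ler_int.
Qed.

From mathcomp Require Import boolp.

Lemma Xge (R : realType) (xi eta : R) (x : nat -> Z3) :
  MP xi eta x -> forall n, cd (x 1%N) i0 + n%:Z <= cd (x (1 + n)%N) i0.
Proof.
move=> [_ Hinc _]; elim=> [|n IH]; first by rewrite addr0.
have := Hinc (1 + n)%N isT; rewrite -addnS; move: IH; lia.
Qed.

Arguments Xge {R xi eta x}.

Lemma part1 (R : realType) (xi eta : R) (x : nat -> Z3) :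
  Qlin_indep3 xi eta -> MP xi eta x ->
  forall N : nat, exists2 i : nat, (N <= i)%N & in_I x i.
Proof.
move=> Hq HM N.
case: (pselect (exists2 i, (N <= i)%N & in_I x i)) => // HN; exfalso.
have hI : forall n m, (N.+1 < m <= N.+1 + n)%N -> ~~ in_I x m.
  move=> n m /andP [hm _]; apply/negP => Hin; apply: HN; exists m => //; lia.
have [H1 Hinc Hm] := HM.
have hp : (1 <= N.+1)%N by [].
have ha := P1 Hq HM hp.
set a := wedge (x N.+1) (x N.+2) in ha.
pose L : R := (cd a i0)%:~R + (cd a i1)%:~R * xi + (cd a i2)%:~R * eta.
have hL : L != 0.
  apply/eqP => hL0.
  have := Hq (cd a i0)%:~R (cd a i1)%:~R (cd a i2)%:~R; rewrite !ratr_int => /(_ hL0) [].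
  move=> /eqP; rewrite intr_eq0 => /eqP e0 /eqP; rewrite intr_eq0 => /eqP e1 /eqP; rewrite intr_eq0 => /eqP e2.
  by move: ha; rewrite /dot e0 e1 e2 !mul0r !addr0 eqxx.
pose C : R := (`|(cd a i1)%:~R| + `|(cd a i2)%:~R|) * delta xi eta (x 1%N).
have bound : forall n, ((cd (x (N.+1 + n)%N) i0)%:~R : R) * `|L| <= C.
  move=> n.
  have c1 := (chain Hq HM hp n (hI n)).1.
  rewrite -/a in c1.
  have hk : (1 <= N.+1 + n)%N by lia.
  set k := (N.+1 + n)%N in c1 hk *.
  set Xr : R := (cd (x k) i0)%:~R.
  have hX : 0 <= Xr by rewrite ler0z; apply: le_trans (H1 k hk).
  have E : Xr * L = (cd a i1)%:~R * (Xr * xi - (cd (x k) i1)%:~R)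
        + (cd a i2)%:~R * (Xr * eta - (cd (x k) i2)%:~R) + (dot a (x k))%:~R.
    rewrite /dot !(rmorphD, rmorphM) /= /L /Xr; ring.
  rewrite c1 rmorph0 addr0 in E.
  have hd : delta xi eta (x k) <= delta xi eta (x 1%N).
    apply: Hm => //; first exact: H1.
    have := Xge HM (k.-1); rewrite add1n prednK //; move: (H1 1%N isT); lia.
  rewrite -(ger0_norm hX) -normrM E /C.
  apply: le_trans (ler_normD _ _) _.
  rewrite !normrM mulrDl.
  apply: lerD; apply: ler_wpM2l => //; apply: le_trans hd; rewrite /delta le_max lexx ?orbT //.
have Lpos : 0 < `|L| by rewrite normr_gt0.
have C0 : 0 <= C / `|L|.
  apply: divr_ge0 (ltW Lpos); rewrite /C; apply: mulr_ge0; last exact: delta_ge0.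
  by apply: addr_ge0.
have hm := archi_boundP C0.
set m := Num.Def.archi_bound _ in hm.
have := bound m.
have Xm : (m%:R : R) <= (cd (x (N.+1 + m)%N) i0)%:~R.
  have := Xge HM (N + m)%N; rewrite addnA add1n.
  have := H1 1%N isT => h1 h2.
  have : (m%:Z <= cd (x (N.+1 + m)%N) i0) by move: h1 h2; lia.
  by rewrite -(ler_int R).
move=> hb.
have : (m%:R : R) * `|L| <= C by apply: le_trans hb; rewrite ler_wpM2r // ltW.
by rewrite -ler_pdivlMr // leNgt hm.
Qed.

Theorem lemma3p2 (R : realType) (xi eta : R) (x : nat -> Z3) :
  Qlin_indep3 xi eta ->
  (exists f : {mpoly rat[2]},
      irreducible_mpoly f /\ msize f = 3%N /\ ~ in_Qx f /\
      (map_mpoly (ratr : rat -> R) f).@[pt2 xi eta] = 0) ->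
  (exists2 lam : R, 1 / 2 < lam & uniform_exponent_gt xi eta lam) ->
  minimal_points xi eta x ->
  (forall N : nat, exists2 i : nat, (N <= i)%N & in_I x i) /\
  (forall i j : nat, in_I x i -> in_I x j -> (i < j)%N ->
     (forall k : nat, (i < k < j)%N -> ~~ in_I x k) ->
     ~~ (Wsp x i == Wsp x j)%MS /\
     ((cd (x j) i0)%:~R : R) <= HW R x i * HW R x j).
Proof.
move=> Hq _ _ Hmp; have HM := @MP_of R xi eta x Hmp.
split; first exact: (@part1 R xi eta x Hq HM).
move=> i j; exact: (@part2 R xi eta x i j Hq HM).
Qed.
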